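(* Let $\alpha>0$ and $\beta\in\mathbb{R}$, and define $u:[0,1]\to\mathbb{R}$ by $u(x)=\beta-\alpha|x-\frac13|$ for $x<1/2$ and $u(x)=u(1-x)$ for $x\ge 1/2$ (equivalently $u(x)=f(x)$ for $x<1/2$, $u(x)=f(1-x)$ for $x\ge1/2$, where $f(x)=\alpha(x-\frac13)+\beta$ for $x<1/3$ and $f(x)=\alpha(\frac13-x)+\beta$ for $1/3\le x\le 1/2$). Let $A=u$ and $T(x)=2x\pmod 1$. Then for every $x\in[0,1]$, $$\max_{T(y)=x}[A(y)+u(y)]=\max\{2u(x/2),\,2u((x+1)/2)\}=u(x)+\beta,$$ so $u$ is a calibrated subaction for the potential $A=u$, with $m(A)=\beta$.
   Context: A calibrated subaction for $A$ is a continuous $V$ with $V(x)=\max_{T(y)=x}[A(y)+V(y)-m(A)]$, where $m(A)$ is the supremum of $\int A\,d\rho$ over $T$-invariant probabilities $\rho$. *)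

(* Defs.v *)
From HB Require Import structures.
From mathcomp Require Import all_boot all_order all_algebra.
From mathcomp Require Import all_classical all_reals all_analysis.
Set Implicit Arguments. Unset Strict Implicit. Unset Printing Implicit Defensive.
Import Order.TTheory GRing.Theory Num.Theory.
Import numFieldNormedType.Exports.
Local Open Scope classical_set_scope.
Local Open Scope ring_scope.

Section Defs.
Variable R : realType.

Definition frac (x : R) : R := x - (Num.floor x)%:~R.

Definition Tdbl (y : R) : R := frac (2 * y).

(* preimages of x in [0,1] under T; [0,1] is read as the circle R/Z, so the
   point x = 1 is identified with 0 (T(y) = x means 2y = x mod 1). *)
Definition Tpre (x : R) : set R := [set y | y \in `[0, 1] /\ Tdbl y = frac x].

Definition is_max_over (S : set R) (g : R -> R) (v : R) : Prop :=
  (exists2 y, S y & g y = v) /\ (forall y, S y -> g y <= v).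

(* T-invariant Borel probability measures on [0,1] (as measures on R
   giving full mass to [0,1]) *)
Definition invariant_prob (P : probability R R) : Prop :=
  P `[0, 1]%classic = 1%E /\
  forall B : set R, measurable B -> P (Tdbl @^-1` B) = P B.

Definition mA (A : R -> R) : \bar R :=
  ereal_sup [set (\int[P]_(x in `[0%R, 1%R]%classic) (A x)%:E)%E
            | P in [set P : probability R R | invariant_prob P]].

Definition calibrated_subaction (A V : R -> R) : Prop :=
  {within `[0, 1]%classic, continuous V} /\
  exists c : R, mA A = c%:E /\
    forall x, x \in `[0, 1] ->
      is_max_over (Tpre x) (fun y => A y + V y - c) (V x).

Definition u_ab (alpha beta : R) (x : R) : R :=
  if x < 1 / 2 then beta - alpha * `|x - 1 / 3|
  else beta - alpha * `|(1 - x) - 1 / 3|.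

End Defs.

(* Main.v *)
Require Import Defs.
From HB Require Import structures.
From mathcomp Require Import all_boot all_order all_algebra.
From mathcomp Require Import all_classical all_reals all_analysis.
From mathcomp Require Import ring lra zify.
Import Order.TTheory GRing.Theory Num.Theory.
Import numFieldNormedType.Exports.
Local Open Scope classical_set_scope.
Local Open Scope ring_scope.

Section P.
Variable R : realType.
Definition half : {nonneg R} := (2^-1)%:nng.
Definition P0 : set R -> \bar R :=
  mscale half (measure_add (@dirac _ R (1/3) R) (@dirac _ R (2/3) R)).
HB.instance Definition _ := Measure.on P0.
Lemma P0E A : P0 A = ((2^-1)%:E * (\d_(1/3 : R)%R A + \d_(2/3 : R)%R A))%E.
Proof. rewrite /P0 /mscale /measure_add /=; congr (_ * _)%E. rewrite /msum big_ord_recl big_ord1 /=. done. Qed.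
Lemma P0_setT : P0 [set: R] = 1%E.
Proof. rewrite P0E !diracT -EFinD -EFinM. congr (_%:E). lra. Qed.
HB.instance Definition _ := @Measure_isProbability.Build _ _ R P0 P0_setT.

End P.

Set Implicit Arguments. Unset Strict Implicit.
Ltac brute :=
  repeat match goal with
  | |- context [if ?a < ?b then _ else _] =>
      let h := fresh "h" in
      case: ifP => h; [| move/negbT: h; rewrite -leNgt => h]; try (exfalso; lra)
  | |- context [`|?t|] =>
      let h := fresh "h" in
      have [h|h] := lerP 0 t; [rewrite (ger0_norm h) | rewrite (ltr0_norm h)]; try (exfalso; lra)
  | |- context [Order.min ?a ?b] => rewrite /Order.min
  | |- context [Order.max ?a ?b] => rewrite /Order.max
  end; try lra; try (congr (_ - _ * _); lra).

Section S.
Variables (R : realType) (alpha beta : R).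
Hypothesis ha : 0 < alpha.
Local Notation u := (u_ab alpha beta).

Lemma uE x : u x = beta - alpha * Num.min `|x - 1/3| `|x - 2/3|.
Proof. rewrite /u_ab. brute. Qed.

Definition d (x : R) := Num.min `|x - 1/3| `|x - 2/3|.

Lemma uEd x : u x = beta - alpha * d x.
Proof. exact: uE. Qed.

Lemma maxlin p q :
  Num.max (2 * (beta - alpha * p)) (2 * (beta - alpha * q)) =
  2 * beta - alpha * Num.min p q * 2.
Proof.
have e1 : (2 * (beta - alpha * p) < 2 * (beta - alpha * q)) = (q < p).
  by rewrite ltr_pM2l // ltrD2l ltrN2 ltr_pM2l.
rewrite /Order.max /Order.min e1; case: (ltgtP p q) => [h|h|->]; ring.
Qed.

Lemma dkey x : 0 <= x <= 1 -> Num.min (d (x / 2)) (d ((x + 1) / 2)) * 2 = d x.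
Proof.
move=> /andP[h0 h1].
have e1 : d (x/2) = `|x - 2/3| / 2 by rewrite /d; brute.
have e2 : d ((x+1)/2) = `|x - 1/3| / 2 by rewrite /d; brute.
rewrite e1 e2 /d; brute.
Qed.

Lemma ule a b : d a <= d b -> u b <= u a.
Proof. rewrite !uEd => h. rewrite lerD2l lerN2. by rewrite ler_pM2l. Qed.

Lemma maxE x : 0 <= x <= 1 ->
  Num.max (2 * u (x / 2)) (2 * u ((x + 1) / 2)) = u x + beta.
Proof.
move=> hx; rewrite !uEd maxlin. rewrite -mulrA dkey //. ring.
Qed.

Lemma frac1 (x : R) : Defs.frac (x + 1) = Defs.frac x.
Proof.
rewrite /Defs.frac floorDrz ?rpred1 // floor1 intrD /=. ring.
Qed.

End S.

Section S2.
Variables (R : realType) (alpha beta : R).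
Hypothesis ha : 0 < alpha.
Local Notation u := (u_ab alpha beta).
Lemma mymax_r (a b : R) : a <= b -> Num.max a b = b.
Proof.
move=> h; rewrite /Order.max; case: ifP => // /negbT; rewrite -leNgt => h'.
by apply/eqP; rewrite eq_le h h'.
Qed.
Lemma mymax_l (a b : R) : b <= a -> Num.max a b = a.
Proof.
move=> h; rewrite /Order.max; case: ifP => // h'.
by move: h; rewrite leNgt h'.
Qed.
Lemma le_mymax_l (a b c : R) : c <= a -> c <= Num.max a b.
Proof. move=> h; rewrite /Order.max; case: ifP => // h'; exact: le_trans h (ltW h'). Qed.
Lemma le_mymax_r (a b c : R) : c <= b -> c <= Num.max a b.
Proof. move=> h; rewrite /Order.max; case: ifP => // /negbT; rewrite -leNgt => h'; exact: le_trans h h'. Qed.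

Lemma part1 x : x \in `[0, 1] ->
  is_max_over (Tpre x) (fun y => u y + u y)
       (Num.max (2 * u (x / 2)) (2 * u ((x + 1) / 2))) /\
     Num.max (2 * u (x / 2)) (2 * u ((x + 1) / 2)) = u x + beta.
Proof.
rewrite in_itv /= => hx; have hx' := hx; move/andP: hx' => [h0 h1].
split; first last.
  exact: (maxE beta ha).
split.
  have [hm|hm] := lerP (2 * u (x / 2)) (2 * u ((x + 1) / 2)).
  - exists ((x + 1) / 2); last by lra.
    split; first by rewrite in_itv /=; apply/andP; split; lra.
    by rewrite /Tdbl -(frac1 x); congr Defs.frac; field.
  - exists (x / 2); last by lra.
    split; first by rewrite in_itv /=; apply/andP; split; lra.
    by rewrite /Tdbl; congr Defs.frac; field.
move=> y [] /[!in_itv] /= /andP[y0 y1]; rewrite /Tdbl /Defs.frac => hf.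
set k := (Num.floor (2 * y) - Num.floor x)%R.
have hk : 2 * y - x = k%:~R by rewrite /k intrB; lra.
have hk1 : (-2)%:~R < k%:~R :> R by rewrite -hk; lra.
have hk2 : k%:~R < 3%:~R :> R by rewrite -hk; lra.
rewrite ltr_int in hk1; rewrite ltr_int in hk2.
have : k = -1 \/ k = 0 \/ k = 1 \/ k = 2 by lia.
clearbody k; move=> hd; move: hk; case: hd => [->|[->|[->|->]]] hk.
- rewrite intrN in hk.
  have ex : x = 1 by lra.
  have ey : y = 0 by lra.
  apply: le_mymax_l; suff : u y <= u (x / 2) by lra.
  apply: (ule beta ha); rewrite ex ey /d; brute.
- have ey : y = x / 2 by move: hk => /= hk; lra.
  apply: le_mymax_l; rewrite ey; lra.
- have ey : y = (x + 1) / 2 by move: hk => /= hk; lra.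
  apply: le_mymax_r; rewrite ey; lra.
- move: hk => /= hk.
  have ex : x = 0 by lra.
  have ey : y = 1 by lra.
  apply: le_mymax_r; suff : u y <= u ((x + 1) / 2) by lra.
  apply: (ule beta ha); rewrite ex ey /d; brute.
Qed.
End S2.

Section M.
Variables (R : realType) (alpha beta : R).
Hypothesis ha : 0 < alpha.
Local Notation u := (u_ab alpha beta).

Lemma u_cont : continuous u.
Proof.
move=> x.
have -> : u = (fun x => beta - alpha * ((fun x => `|x - 1/3|) \min (fun x => `|x - 2/3|)) x).
  by apply/funext => y; rewrite uE.
apply: cvgB; first exact: cvg_cst.
apply: cvgM; first exact: cvg_cst.
apply: continuous_min; apply: cvg_norm; apply: cvgB => //; exact: cvg_cst.
Qed.

Lemma u_le x : u x <= beta.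
Proof.
rewrite uE; set m := Num.min _ _.
have hm : 0 <= m by rewrite /m /Order.min; case: ifP.
have : 0 <= alpha * m by apply: mulr_ge0 => //; exact: ltW.
lra.
Qed.

Lemma int_cont (P : probability R R) (f : R -> R) : continuous f ->
  P.-integrable `[0, 1]%classic (EFin \o f).
Proof.
move=> cf.
have cptA : compact (`[0%R, 1%R]%classic : set R) by exact: segment_compact.
have ctsfA : {within (`[0%R, 1%R]%classic : set R), continuous f} by exact: continuous_subspaceT.
apply: measurable_bounded_integrable => //.
- by rewrite (le_lt_trans (probability_le1 _ _)) // ltry.
- apply: measurable_funTS; exact: measurable_realfun.continuous_measurable_fun.
- have /compact_bounded[M [_ mrt]] := continuous_compact ctsfA cptA.
  by exists M; split; rewrite ?num_real // => ? ? ? ?; exact: mrt.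
Qed.

Lemma int_le (P : probability R R) : P `[0, 1]%classic = 1%E ->
  (\int[P]_(x in `[0%R, 1%R]%classic) (u x)%:E <= beta%:E)%E.
Proof.
move=> H1.
have -> : beta%:E = (\int[P]_(x in `[0%R, 1%R]%classic) (cst beta%:E) x)%E.
  by rewrite integral_cst //= H1 mule1.
apply: le_integral => //.
- exact: (int_cont P u_cont).
- exact: (int_cont P (@cst_continuous _ _ beta)).
- by move=> x _; rewrite lee_fin u_le.
Qed.

Lemma dirac_pre (a : R) (B : set R) :
  @dirac _ R a R (@Tdbl R @^-1` B) = @dirac _ R (Tdbl a) R B.
Proof.
by rewrite !diracE.
Qed.

Lemma z0 : ((0:int)%:~R : R) = 0. Proof. by []. Qed.
Lemma z1 : ((1:int)%:~R : R) = 1. Proof. by []. Qed.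
Lemma z2 : ((2:int)%:~R : R) = 2. Proof. by []. Qed.

Lemma T13 : Tdbl (1/3 : R) = 2/3.
Proof.
rewrite /Tdbl /Defs.frac (@floor_def _ _ 0); first by rewrite z0; lra.
by rewrite add0r z0 z1; apply/andP; split; lra.
Qed.

Lemma T23 : Tdbl (2/3 : R) = 1/3.
Proof.
rewrite /Tdbl /Defs.frac (@floor_def _ _ 1); first by rewrite z1; lra.
by rewrite z1 (_ : (1 + 1)%R = 2%:Z) // z2; apply/andP; split; lra.
Qed.

Lemma in01 (a : R) : 0 <= a <= 1 -> a \in (`[0%R, 1%R]%classic : set R).
Proof. by move=> h; apply/mem_set; rewrite /= in_itv. Qed.

Lemma P0E' (A : set R) : ((P0 R : probability R R) A =
   ((2^-1)%:E * (\d_(1/3 : R)%R A + \d_(2/3 : R)%R A)))%E.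
Proof. exact: P0E. Qed.

Lemma P0_inv : invariant_prob (P0 R).
Proof.
split.
  rewrite P0E' !diracE !in01; try (apply/andP; split; lra).
  by rewrite /= -EFinD -EFinM; congr (_%:E); lra.
move=> B _; rewrite !P0E' !dirac_pre T13 T23.
by rewrite addeC.
Qed.

Lemma P0_int : (\int[P0 R]_(x in `[0%R, 1%R]%classic) (u x)%:E = beta%:E)%E.
Proof.
rewrite (@ae_eq_integral _ _ _ _ _ (cst beta%:E)) //.
- rewrite integral_cst //=.
  have := P0_inv; case=> -> _; by rewrite mule1.
- by have /integrableP[] := int_cont (P0 R) u_cont.
- rewrite /ae_eq; exists (~` ([set (1/3 : R)] `|` [set (2/3 : R)])); split.
  + by apply: measurableC; apply: measurableU; exact: measurable_set1.
  + change (P0 R (~` [set (1/3 : R); 2/3]) = 0%E).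
    rewrite P0E !diracE.
    have -> : (1/3 : R) \in ~` [set (1/3 : R); 2/3] = false.
      by apply/negbTE/negP => /set_mem; apply; left.
    have -> : (2/3 : R) \in ~` [set (1/3 : R); 2/3] = false.
      by apply/negbTE/negP => /set_mem; apply; right.
    by rewrite /= adde0 mule0.
  + move=> x /= hx [|] hx1; apply: hx; rewrite hx1 => _ /=; congr (_%:E); rewrite uE; brute.
Qed.

Lemma mA_eq : mA u = beta%:E.
Proof.
apply/eqP; rewrite eq_le; apply/andP; split.
- apply: ge_ereal_sup => _ [P [HP1 _] <-]; exact: int_le.
- rewrite -P0_int; apply: ereal_sup_ubound; exists (P0 R) => //; exact: P0_inv.
Qed.
End M.

Theorem mainTheorem5 (R : realType) (alpha beta : R) (halpha : 0 < alpha) :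
  let u := u_ab alpha beta in
  let A := u in
  (forall x : R, x \in `[0, 1] ->
     is_max_over (Tpre x) (fun y => A y + u y)
       (Num.max (2 * u (x / 2)) (2 * u ((x + 1) / 2))) /\
     Num.max (2 * u (x / 2)) (2 * u ((x + 1) / 2)) = u x + beta) /\
  mA A = beta%:E /\
  calibrated_subaction A u.
Proof.
move=> u A; rewrite {}/A {}/u.
have mAe : mA (u_ab alpha beta) = beta%:E by exact: mA_eq.
split; [|split] => //.
- move=> x hx; exact: (@part1 R alpha beta halpha x hx).
- split; first by apply: continuous_subspaceT; exact: u_cont.
  exists beta; split => // x hx.
  have [[[y hy e] ub] eq] := @part1 R alpha beta halpha x hx.
  split.
  + by exists y => //; lra.
  + move=> z hz; have := ub z hz; lra.
Qed.
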